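(* Let $\mathscr S=([0,\infty)\rtimes\mathbb{N}^{\times},\mathcal O)$ be the scaling site defined below. The canonical projection from the set $\mathscr S(\mathbb{R}_{\max})$ of points of $\mathscr S$ defined over $\mathbb{R}_+^{\max}$ to the set of (isomorphism classes of) points of the topos $[0,\infty)\rtimes\mathbb{N}^{\times}$ is bijective.
   Context: $\mathbb{N}^{\times}$ is the multiplicative monoid of positive integers; $[0,\infty)\rtimes\mathbb{N}^{\times}$ is the topos of $\mathbb{N}^{\times}$-equivariant sheaves of sets on $[0,\infty)$. $\mathbb{R}_{\max}=\mathbb{R}\cup\{-\infty\}$ with addition $\max$ and multiplication $+$, isomorphic via $\exp$ to $\mathbb{R}_+^{\max}$. The structure sheaf $\mathcal O$ assigns to an open $U\subset[0,\infty)$ the semiring (operations max and $+$) of continuous convex functions $f:U\to\mathbb{R}_{\max}$ such that every $\lambda\in U$ has an open interval neighborhood $V$ on which $f$ is affine with integer slope on each component of $V\setminus\{\lambda\}$; $n\in\mathbb{N}^{\times}$ acts by $f\mapsto f(n\,\cdot)$. A point of $\mathscr S$ over $\mathbb{R}_+^{\max}$ is a pair consisting of a point $\mathfrak p$ of the topos and an $\mathbb{R}_{\max}$-linear semiring morphism from the stalk $\mathcal O_{\mathfrak p}$ to $\mathbb{R}_{\max}$; the projection forgets the morphism. *)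

(* Defs.v *)
From Stdlib Require Import Reals Lra.
Open Scope R_scope.

(** * The tropical semifield R_max = R ∪ {-oo}; None encodes -oo. *)
Definition Rmx := option R.

Definition mx (a b : Rmx) : Rmx :=
  match a, b with
  | None, _ => b
  | _, None => a
  | Some x, Some y => Some (Rbasic_fun.Rmax x y)
  end.

Definition pl (a b : Rmx) : Rmx :=
  match a, b with
  | Some x, Some y => Some (x + y)
  | _, _ => None
  end.

Definition rmax_le (a b : Rmx) : Prop :=
  match a, b with
  | None, _ => True
  | Some _, None => False
  | Some x, Some y => x <= y
  end.

Definition rmax_comb (t : R) (a b : Rmx) : Rmx :=
  match a, b with
  | Some x, Some y => Some (t * x + (1 - t) * y)
  | _, _ => None
  end.

(** exp : R_max -> R_+^max, exp(-oo) = 0 (used for the topology of R_max) *)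
Definition rmax_exp (a : Rmx) : R :=
  match a with None => 0 | Some x => exp x end.

Definition is_open_pos (U : R -> Prop) : Prop :=
  (forall x, U x -> 0 <= x) /\
  (forall x, U x -> exists eps, 0 < eps /\
       forall y, 0 <= y -> Rabs (y - x) < eps -> U y).

Record Open := mkOpen { ocar :> R -> Prop ; oopen : is_open_pos ocar }.

(** * The structure sheaf O.  A section over U is represented by a function
    R -> Rmx, only its values on U being relevant. *)

(** f is affine with integer slope on the set I (in the R_max sense:
    f x = b + n x, with b in R_max, so the constant -oo is allowed). *)
Definition affine_int_on (I : R -> Prop) (f : R -> Rmx) : Prop :=
  exists (n : Z) (b : Rmx), forall x, I x -> f x = pl b (Some (IZR n * x)).

Definition continuous_on (U : R -> Prop) (f : R -> Rmx) : Prop :=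
  forall x, U x -> forall eps, 0 < eps -> exists delta, 0 < delta /\
    forall y, U y -> Rabs (y - x) < delta ->
      Rabs (rmax_exp (f y) - rmax_exp (f x)) < eps.

Definition convex_on (U : R -> Prop) (f : R -> Rmx) : Prop :=
  forall x y t, 0 < t < 1 ->
    (forall z, Rmin x y <= z <= Rbasic_fun.Rmax x y -> U z) ->
    rmax_le (f (t * x + (1 - t) * y)) (rmax_comb t (f x) (f y)).

Definition locally_piecewise_int (U : R -> Prop) (f : R -> Rmx) : Prop :=
  forall lam, U lam -> exists a b, a < lam < b /\
    (forall y, 0 <= y -> a < y < b -> U y) /\
    affine_int_on (fun y => 0 <= y /\ a < y < lam) f /\
    affine_int_on (fun y => lam < y < b) f.

Definition O_sec (U : R -> Prop) (f : R -> Rmx) : Prop :=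
  continuous_on U f /\ convex_on U f /\ locally_piecewise_int U f.

(** * The site of [0,oo) ⋊ N^x : objects are opens, a morphism V -> U is an
    n in N^x with n V ⊆ U; composition is multiplication.  A presheaf such as
    O maps f in O(U) to f(n .) in O(V).  Covers are ordinary open covers
    (by inclusions, n = 1). *)
Definition hom (V U : Open) (n : nat) : Prop :=
  (1 <= n)%nat /\ forall x, V x -> U (INR n * x).

(** * Points of the topos: flat (filtering), cover-preserving covariant
    functors from the site to sets. *)
Record point := {
  pt : Open -> Type ;
  pmap : forall (V U : Open) (n : nat), hom V U n -> pt V -> pt U ;
  pmap_id : forall U (h : hom U U 1) a, pmap U U 1 h a = a ;
  pmap_comp : forall V U W n m (h1 : hom V U n) (h2 : hom U W m)
      (h3 : hom V W (m * n)) a,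
      pmap U W m h2 (pmap V U n h1 a) = pmap V W (m * n) h3 a ;
  flat_ne : exists (U : Open) (a : pt U), True ;
  flat_pair : forall (U V : Open) (a : pt U) (b : pt V),
      exists (W : Open) (c : pt W) n m (h1 : hom W U n) (h2 : hom W V m),
        pmap W U n h1 c = a /\ pmap W V m h2 c = b ;
  flat_eq : forall (U V : Open) n m (h1 : hom U V n) (h2 : hom U V m) (a : pt U),
      pmap U V n h1 a = pmap U V m h2 a ->
      exists (W : Open) k (hk : hom W U k) (c : pt W),
        pmap W U k hk c = a /\ (n * k = m * k)%nat ;
  cont : forall (U : Open) (I : Type) (Ui : I -> Open),
      (forall i x, Ui i x -> U x) -> (forall x, U x -> exists i, Ui i x) ->
      forall a : pt U, exists i (b : pt (Ui i)) (h : hom (Ui i) U 1),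
        pmap (Ui i) U 1 h b = a
}.

Definition pt_iso (p q : point) : Prop :=
  exists (al : forall U, pt p U -> pt q U) (be : forall U, pt q U -> pt p U),
    (forall U a, be U (al U a) = a) /\ (forall U b, al U (be U b) = b) /\
    (forall V U n (h : hom V U n) a, al U (pmap p V U n h a) = pmap q V U n h (al V a)).

(** * R_max-linear semiring morphisms from the stalk O_p to R_max.
    The stalk is the colimit  O_p = colim_{(U, a in p(U))} O(U), i.e. triples
    (U, f, a) with f in O(U), a in p(U), modulo (V, f(n .), c) ~ (U, f, p(n) c)
    for n : V -> U; by filteredness any two elements are represented over a
    common (U,a), where the operations are pointwise.  A map out of O_p is
    thus a function on such triples respecting these identifications. *)
Record stalk_hom (p : point) := {
  rho : forall U : Open, (R -> Rmx) -> pt p U -> Rmx ;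
  rho_ext : forall (U : Open) f g a, O_sec U f -> O_sec U g ->
      (forall x, U x -> f x = g x) -> rho U f a = rho U g a ;
  rho_res : forall V U n (h : hom V U n) f a, O_sec U f ->
      rho V (fun x => f (INR n * x)) a = rho U f (pmap p V U n h a) ;
  rho_max : forall (U : Open) f g a, O_sec U f -> O_sec U g ->
      rho U (fun x => mx (f x) (g x)) a = mx (rho U f a) (rho U g a) ;
  rho_plus : forall (U : Open) f g a, O_sec U f -> O_sec U g ->
      rho U (fun x => pl (f x) (g x)) a = pl (rho U f a) (rho U g a) ;
  rho_zero : forall (U : Open) a, rho U (fun _ => None) a = None ;
  rho_one : forall (U : Open) a, rho U (fun _ => Some 0) a = Some 0 ;
  rho_lin : forall (c : Rmx) (U : Open) f a, O_sec U f ->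
      rho U (fun x => pl c (f x)) a = pl c (rho U f a)
}.

Definition site_pt_iso (p : point) (r : stalk_hom p) (q : point) (s : stalk_hom q)
  : Prop :=
  exists (al : forall U, pt p U -> pt q U) (be : forall U, pt q U -> pt p U),
    (forall U a, be U (al U a) = a) /\ (forall U b, al U (be U b) = b) /\
    (forall V U n (h : hom V U n) a, al U (pmap p V U n h a) = pmap q V U n h (al V a)) /\
    (forall (U : Open) f a, O_sec U f -> rho q s U f (al U a) = rho p r U f a).

(* Main.v *)
Require Import Defs.
From Stdlib Require Import Reals Lra Lia ZArith Classical ProofIrrelevance FunctionalExtensionality ClassicalEpsilon.
Open Scope R_scope.

Definition aff (k : Z) (b : Rmx) : R -> Rmx := fun x => pl b (Some (IZR k * x)).

Lemma exp_aff_cont (k : Z) (b : Rmx) (lam eps : R) : 0 < eps ->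
  exists delta, 0 < delta /\ forall y, Rabs (y - lam) < delta ->
    Rabs (rmax_exp (aff k b y) - rmax_exp (aff k b lam)) < eps.
Proof.
  intros He. destruct b as [c|].
  - assert (Hc : continuity_pt (fun y => exp (c + IZR k * y)) lam) by reg.
    destruct (Hc eps He) as [d [Hd Hy]]. exists d; split; auto.
    intros y Hyl. unfold aff; simpl.
    destruct (Req_dec y lam) as [->|Hne].
    + rewrite Rminus_diag, Rabs_R0; auto.
    + apply (Hy y). split; [split; [exact I| auto] | exact Hyl].
  - exists 1; split; [lra|]. intros. unfold aff; simpl. rewrite Rminus_diag, Rabs_R0; auto.
Qed.

Lemma rmax_exp_inj (a b : Rmx) : rmax_exp a = rmax_exp b -> a = b.
Proof.
  destruct a as [x|], b as [y|]; simpl; intros H; auto.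
  - f_equal; apply exp_inv; auto.
  - pose proof (exp_pos x); lra.
  - pose proof (exp_pos y); lra.
Qed.

Lemma comb_between x y t : 0 < t < 1 ->
  Rmin x y <= t * x + (1 - t) * y <= Rmax x y.
Proof.
  intros Ht. destruct (Rle_dec x y).
  - rewrite Rmin_left, Rmax_right by lra. split; nra.
  - rewrite Rmin_right, Rmax_left by lra. split; nra.
Qed.

Lemma O_sec_ext (U : Open) f g : (forall x, U x -> f x = g x) -> O_sec U f -> O_sec U g.
Proof.
  intros E [Hc [Hv Hl]]. split; [|split].
  - intros x Ux eps He. destruct (Hc x Ux eps He) as [d [Hd Hy]].
    exists d; split; auto. intros y Uy Hyx. rewrite <- !E by auto. auto.
  - intros x y t Ht Hz.
    assert (Ux : U x) by (apply Hz; split; [apply Rmin_l| apply Rmax_l]).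
    assert (Uy : U y) by (apply Hz; split; [apply Rmin_r| apply Rmax_r]).
    assert (Um : U (t * x + (1 - t) * y)) by (apply Hz; apply comb_between; auto).
    rewrite <- !E by auto. apply Hv; auto.
  - intros lam Ul. destruct (Hl lam Ul) as [a [b [Hab [HU [[n1 [b1 H1]] [n2 [b2 H2]]]]]]].
    assert (0 <= lam) by (apply (proj1 (oopen U)); auto).
    exists a, b; split; auto; split; auto; split.
    + exists n1, b1. intros x Hx. rewrite <- E by (apply HU; lra). apply H1; auto.
    + exists n2, b2. intros x Hx. rewrite <- E by (apply HU; lra). apply H2; auto.
Qed.

Lemma O_sec_restrict (W U : Open) f : (forall x, W x -> U x) -> O_sec U f -> O_sec W f.
Proof.
  intros S [Hc [Hv Hl]]. split; [|split].
  - intros x Wx eps He. destruct (Hc x (S x Wx) eps He) as [d [Hd Hy]].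
    exists d; split; auto.
  - intros x y t Ht Hz. apply Hv; auto.
  - intros lam Wl. destruct (Hl lam (S lam Wl)) as [a [b [Hab [HU [[n1 [b1 H1]] [n2 [b2 H2]]]]]]].
    destruct (proj2 (oopen W) lam Wl) as [e [He HW]].
    exists (Rmax a (lam - e)), (Rmin b (lam + e)).
    assert (a <= Rmax a (lam - e)) by apply Rmax_l.
    assert (lam - e <= Rmax a (lam - e)) by apply Rmax_r.
    assert (Rmin b (lam + e) <= b) by apply Rmin_l.
    assert (Rmin b (lam + e) <= lam + e) by apply Rmin_r.
    assert (Rmax a (lam - e) < lam) by (apply Rmax_lub_lt; lra).
    assert (lam < Rmin b (lam + e)) by (apply Rmin_glb_lt; lra).
    split; [lra|]; split.
    + intros y Hy0 Hy. apply HW; auto. split_Rabs; lra.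
    + split.
      * exists n1, b1. intros x Hx. apply H1. lra.
      * exists n2, b2. intros x Hx. apply H2. lra.
Qed.

Lemma O_sec_aff (U : Open) k b : O_sec U (aff k b).
Proof.
  split; [|split].
  - intros x Ux eps He. destruct (exp_aff_cont k b x eps He) as [d [Hd H]].
    exists d; split; auto.
  - intros x y t Ht Hz. unfold aff. destruct b as [c|]; simpl; auto.
    right; ring.
  - intros lam Ul. destruct (proj2 (oopen U) lam Ul) as [e [He HW]].
    exists (lam - e), (lam + e). split; [lra|]. split.
    + intros y Hy0 Hy. apply HW; auto. split_Rabs; lra.
    + split; exists k, b; intros; reflexivity.
Qed.

Lemma cont_match (U : Open) f k b lam : continuous_on U f -> U lam ->
  (forall d, 0 < d -> exists y, U y /\ Rabs (y - lam) < d /\ f y = aff k b y) ->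
  f lam = aff k b lam.
Proof.
  intros Hc Ul Hy. apply rmax_exp_inj.
  apply NNPP; intro Hne.
  set (e := Rabs (rmax_exp (f lam) - rmax_exp (aff k b lam)) / 2).
  assert (He : 0 < e).
  { unfold e. assert (0 < Rabs (rmax_exp (f lam) - rmax_exp (aff k b lam))); [|lra].
    apply Rabs_pos_lt. intro; apply Hne; lra. }
  destruct (Hc lam Ul e He) as [d1 [Hd1 H1]].
  destruct (exp_aff_cont k b lam e He) as [d2 [Hd2 H2]].
  destruct (Hy (Rmin d1 d2)) as [y [Uy [Hyl Efy]]].
  { apply Rmin_glb_lt; auto. }
  assert (Rmin d1 d2 <= d1) by apply Rmin_l. assert (Rmin d1 d2 <= d2) by apply Rmin_r.
  specialize (H1 y Uy ltac:(lra)). specialize (H2 y ltac:(lra)).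
  rewrite Efy in H1. unfold e in *.
  revert H1 H2. generalize (rmax_exp (aff k b y)) (rmax_exp (f lam)) (rmax_exp (aff k b lam)).
  intros u v w H1 H2. split_Rabs; lra.
Qed.

Lemma mx_idem a : mx a a = a.
Proof. destruct a; simpl; auto. f_equal. apply Rmax_left; lra. Qed.

Lemma geom (U : Open) f lam : O_sec U f -> U lam ->
  exists delta k1 b1 k2 b2, 0 < delta /\
    forall y, U y -> Rabs (y - lam) < delta -> f y = mx (aff k1 b1 y) (aff k2 b2 y).
Proof.
  intros [Hc [Hv Hl]] Ul.
  assert (Hpos : forall y, U y -> 0 <= y) by (intros; apply (proj1 (oopen U)); auto).
  destruct (Hl lam Ul) as [a0 [b0 [Hab [HU [[k1 [b1 H1]] [k2 [b2 H2]]]]]]].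
  pose proof (Hpos lam Ul) as Hl0.
  assert (ER : f lam = aff k2 b2 lam).
  { apply (cont_match U); auto. intros d Hd.
    exists (lam + Rmin d (b0 - lam) / 2).
    assert (Rmin d (b0 - lam) <= d) by apply Rmin_l.
    assert (Rmin d (b0 - lam) <= b0 - lam) by apply Rmin_r.
    assert (0 < Rmin d (b0 - lam)) by (apply Rmin_glb_lt; lra).
    split; [apply HU; lra|]. split; [split_Rabs; lra|]. apply H2. lra. }
  destruct (Req_dec lam 0) as [E0|Hlp].
  - exists (b0 - lam), k2, b2, k2, b2. split; [lra|].
    intros y Uy Hy. rewrite mx_idem. pose proof (Hpos y Uy).
    destruct (Req_dec y lam) as [->|Hne]; auto.
    apply H2. split_Rabs; lra.
  - assert (Hlp' : 0 < lam) by lra.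
    assert (EL : f lam = aff k1 b1 lam).
    { apply (cont_match U); auto. intros d Hd.
      set (m := Rmin (Rmin d (lam - a0)) lam).
      assert (m <= Rmin d (lam - a0)) by apply Rmin_l.
      assert (m <= lam) by apply Rmin_r.
      assert (Rmin d (lam - a0) <= d) by apply Rmin_l.
      assert (Rmin d (lam - a0) <= lam - a0) by apply Rmin_r.
      assert (0 < m) by (apply Rmin_glb_lt; [apply Rmin_glb_lt|]; lra).
      exists (lam - m / 2).
      split; [apply HU; lra|]. split; [split_Rabs; lra|]. apply H1. lra. }
    set (dl := Rmin (Rmin (lam - a0) (b0 - lam)) lam).
    assert (dl <= Rmin (lam - a0) (b0 - lam)) by apply Rmin_l.
    assert (dl <= lam) by apply Rmin_r.
    assert (Rmin (lam - a0) (b0 - lam) <= lam - a0) by apply Rmin_l.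
    assert (Rmin (lam - a0) (b0 - lam) <= b0 - lam) by apply Rmin_r.
    assert (0 < dl) by (apply Rmin_glb_lt; [apply Rmin_glb_lt|]; lra).
    exists dl, k1, b1, k2, b2. split; auto.
    destruct b1 as [c1|].
    +
      destruct b2 as [c2|].
      2:{ rewrite EL in ER; unfold aff in ER; simpl in ER; discriminate. }
      rewrite EL in ER. unfold aff in ER; simpl in ER. injection ER as ER.
      assert (Hk : IZR k1 <= IZR k2).
      { set (d := dl / 2).
        pose proof (Hv (lam - d) (lam + d) (1/2) ltac:(lra)) as Hcv.
        assert (Hz : forall z, Rmin (lam - d) (lam + d) <= z <= Rmax (lam - d) (lam + d) -> U z).
        { rewrite Rmin_left, Rmax_right by (unfold d; lra). intros z Hz. apply HU; unfold d in *; lra. }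
        specialize (Hcv Hz).
        replace (1 / 2 * (lam - d) + (1 - 1 / 2) * (lam + d)) with lam in Hcv by field.
        rewrite (H1 (lam - d)) in Hcv by (unfold d in *; lra).
        rewrite (H2 (lam + d)) in Hcv by (unfold d in *; lra).
        rewrite EL in Hcv. unfold aff in Hcv; simpl in Hcv.
        assert (0 < d) by (unfold d; lra).
        apply Rnot_lt_le; intro Hlt. nra. }
      intros y Uy Hy. pose proof (Hpos y Uy).
      unfold aff; simpl. f_equal.
      destruct (Rtotal_order y lam) as [Hyl|[Hyl|Hyl]].
      * rewrite H1 by (split_Rabs; lra). unfold aff; simpl. f_equal.
        symmetry; apply Rmax_left. nra.
      * subst y. rewrite EL. unfold aff; simpl. f_equal. symmetry; apply Rmax_left. lra.
      * rewrite H2 by (split_Rabs; lra). unfold aff; simpl. f_equal.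
        symmetry; apply Rmax_right. nra.
    + assert (b2 = None).
      { rewrite EL in ER. unfold aff in ER; simpl in ER. destruct b2; simpl in ER; auto. discriminate. }
      subst b2. intros y Uy Hy. pose proof (Hpos y Uy). unfold aff; simpl.
      destruct (Rtotal_order y lam) as [Hyl|[Hyl|Hyl]].
      * rewrite H1 by (split_Rabs; lra). reflexivity.
      * subst y. rewrite EL. reflexivity.
      * rewrite H2 by (split_Rabs; lra). reflexivity.
Qed.

Definition Ropen (Q : R -> Prop) : Prop :=
  forall x, Q x -> exists eps, 0 < eps /\ forall y, Rabs (y - x) < eps -> Q y.

Lemma opand_open (U : Open) Q : Ropen Q -> is_open_pos (fun y => U y /\ Q y).
Proof.
  intros HQ. split.
  - intros x [Ux _]. apply (proj1 (oopen U)); auto.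
  - intros x [Ux Qx]. destruct (proj2 (oopen U) x Ux) as [e1 [He1 H1]].
    destruct (HQ x Qx) as [e2 [He2 H2]].
    exists (Rmin e1 e2). split; [apply Rmin_glb_lt; auto|].
    intros y Hy Hyx. pose proof (Rmin_l e1 e2); pose proof (Rmin_r e1 e2).
    split; [apply H1|apply H2]; auto; lra.
Qed.

Definition opand (U : Open) Q (HQ : Ropen Q) : Open := mkOpen _ (opand_open U Q HQ).

Lemma Ropen_and P Q : Ropen P -> Ropen Q -> Ropen (fun y => P y /\ Q y).
Proof.
  intros HP HQ x [Px Qx]. destruct (HP x Px) as [e1 [He1 H1]].
  destruct (HQ x Qx) as [e2 [He2 H2]].
  exists (Rmin e1 e2). split; [apply Rmin_glb_lt; auto|].
  intros y Hyx. pose proof (Rmin_l e1 e2); pose proof (Rmin_r e1 e2).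
  split; [apply H1|apply H2]; lra.
Qed.

Lemma Ropen_lt c : Ropen (fun y => y < c).
Proof. intros x Hx. exists (c - x). split; [lra|]. intros y H. split_Rabs; lra. Qed.
Lemma Ropen_gt c : Ropen (fun y => c < y).
Proof. intros x Hx. exists (x - c). split; [lra|]. intros y H. split_Rabs; lra. Qed.
Lemma Ropen_ball c e : Ropen (fun y => Rabs (y - c) < e).
Proof. intros x Hx. exists (e - Rabs (x - c)). split; [lra|]. intros y H. split_Rabs; lra. Qed.

Definition Lt (U : Open) c : Open := opand U _ (Ropen_lt c).
Definition Ball (U : Open) c e : Open := opand U _ (Ropen_ball c e).

Lemma oint_open (W1 W2 : Open) : is_open_pos (fun y => W1 y /\ W2 y).
Proof.
  split.
  - intros x [Ux _]. apply (proj1 (oopen W1)); auto.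
  - intros x [Ux Qx]. destruct (proj2 (oopen W1) x Ux) as [e1 [He1 H1]].
    destruct (proj2 (oopen W2) x Qx) as [e2 [He2 H2]].
    exists (Rmin e1 e2). split; [apply Rmin_glb_lt; auto|].
    intros y Hy Hyx. pose proof (Rmin_l e1 e2); pose proof (Rmin_r e1 e2).
    split; [apply H1|apply H2]; auto; lra.
Qed.
Definition oint (W1 W2 : Open) : Open := mkOpen _ (oint_open W1 W2).

Lemma hom_incl (W U : Open) : (forall x, W x -> U x) -> hom W U 1.
Proof. intros H. split; auto. intros x Wx. simpl. rewrite Rmult_1_l. auto. Qed.

Lemma hom1_sub (W U : Open) : hom W U 1 -> forall x, W x -> U x.
Proof. intros [_ H] x Wx. specialize (H x Wx). simpl in H. rewrite Rmult_1_l in H. auto. Qed.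

Lemma pmap_irr (p : point) V U n m (h1 : hom V U n) (h2 : hom V U m) a :
  n = m -> pmap p V U n h1 a = pmap p V U m h2 a.
Proof. intros ->. f_equal. apply proof_irrelevance. Qed.

Lemma pmap_comp' (p : point) V U W n m k (h1 : hom V U n) (h2 : hom U W m) (h3 : hom V W k) a :
  k = (m * n)%nat -> pmap p U W m h2 (pmap p V U n h1 a) = pmap p V W k h3 a.
Proof. intros ->. apply pmap_comp. Qed.

Definition Fm (p : point) (U : Open) (a : pt p U) (W : Open) : Prop :=
  exists (a' : pt p W) (h : hom W U 1), pmap p W U 1 h a' = a.

Lemma Fm_self (p : point) (U : Open) (a : pt p U) : Fm p U a U.
Proof. exists a, (hom_incl U U (fun x h => h)). apply pmap_id. Qed.

Lemma Fm_sub (p : point) (U : Open) (a : pt p U) W : Fm p U a W -> forall x, W x -> U x.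
Proof. intros [a' [h _]]. apply hom1_sub; auto. Qed.

Lemma Fm_mono (p : point) (U : Open) (a : pt p U) (W1 W2 : Open) : (forall x, W1 x -> W2 x) -> (forall x, W2 x -> U x) ->
  Fm p U a W1 -> Fm p U a W2.
Proof.
  intros S12 S2 [a' [h E]].
  exists (pmap p W1 W2 1 (hom_incl _ _ S12) a'), (hom_incl _ _ S2).
  rewrite (pmap_comp' p _ _ _ _ _ 1 _ _ h); auto.
Qed.

Lemma Fm_cover (p : point) (U : Open) (a : pt p U) W (I : Type) (Ui : I -> Open) : Fm p U a W ->
  (forall i x, Ui i x -> W x) -> (forall x, W x -> exists i, Ui i x) ->
  exists i, Fm p U a (Ui i).
Proof.
  intros HF S C. pose proof (Fm_sub _ _ _ _ HF) as SW. destruct HF as [a' [h E]].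
  destruct (cont p W I Ui S C a') as [i [b [h' E']]].
  exists i. exists b, (hom_incl _ _ (fun x Hx => SW x (S i x Hx))).
  rewrite <- E, <- E'. symmetry. apply (pmap_comp' p); auto.
Qed.

Lemma Fm_empty (p : point) (U : Open) (a : pt p U) W : Fm p U a W -> (forall x, ~ W x) -> False.
Proof.
  intros [a' _] H.
  destruct (cont p W Empty_set (fun i => match i with end) (fun i => match i with end)
    (fun x Wx => False_ind _ (H x Wx)) a') as [[] _].
Qed.

Lemma Fm_inter (p : point) (U : Open) (a : pt p U) W1 W2 : Fm p U a W1 -> Fm p U a W2 -> Fm p U a (oint W1 W2).
Proof.
  intros H1 H2. pose proof (Fm_sub _ _ _ _ H1) as S1.
  destruct H1 as [a1 [h1 E1]], H2 as [a2 [h2 E2]].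
  destruct (flat_pair p W1 W2 a1 a2) as [W [c [n [m [g1 [g2 [F1 F2]]]]]]].
  assert (hn : hom W U n).
  { destruct g1 as [Hn G1]. split; [exact Hn|]. intros x Wx. apply S1. exact (G1 x Wx). }
  assert (hm : hom W U m).
  { destruct g2 as [Hm G2]. split; [exact Hm|]. intros x Wx. apply (hom1_sub _ _ h2).
    exact (G2 x Wx). }
  assert (Ea : pmap p W U n hn c = pmap p W U m hm c).
  { rewrite <- (pmap_comp' p W W1 U n 1 n g1 h1) by lia.
    rewrite <- (pmap_comp' p W W2 U m 1 m g2 h2) by lia.
    rewrite F1, F2, E1, E2. auto. }
  destruct (flat_eq p W U n m hn hm c Ea) as [W' [k [hk [c' [_ Enm]]]]].
  assert (n = m).
  { destruct hk as [Hk _]. apply (Nat.mul_cancel_r n m k); lia. }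
  subst m.
  assert (g : hom W (oint W1 W2) n).
  { split; [apply g1|]. intros x Wx. split; [apply g1|apply g2]; auto. }
  exists (pmap p W (oint W1 W2) n g c).
  exists (hom_incl (oint W1 W2) U (fun x (Hx : oint W1 W2 x) => S1 x (proj1 Hx))).
  rewrite (pmap_comp' p _ _ _ _ _ n _ _ hn) by lia. rewrite <- E1, <- F1.
  symmetry. apply (pmap_comp' p). lia.
Qed.

Definition lamP (p : point) (U : Open) (a : pt p U) (l : R) : Prop :=
  U l /\ forall e, 0 < e -> Fm p U a (Ball U l e).

Lemma Lt_mem (U : Open) c y : Lt U c y <-> U y /\ y < c.
Proof. reflexivity. Qed.
Lemma Ball_mem (U : Open) c e y : Ball U c e y <-> U y /\ Rabs (y - c) < e.
Proof. reflexivity. Qed.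

Lemma arch_nat x : exists n : nat, x < INR n.
Proof.
  destruct (INR_archimed 1 x ltac:(lra)) as [n Hn]. exists n. lra.
Qed.

Lemma lam_ex (p : point) (U : Open) (a : pt p U) : exists l, lamP p U a l.
Proof.
  set (SS := fun x => Fm p U a (Lt U x)).
  assert (Smono : forall x y, x <= y -> SS x -> SS y).
  { intros x y Hxy Hx. unfold SS in *. apply (Fm_mono p U a (Lt U x)); auto.
    - intros z [Uz Hz]. split; auto; lra.
    - intros z [Uz Hz]. auto. }
  assert (Hpos : forall y, U y -> 0 <= y) by (intros; apply (proj1 (oopen U)); auto).
  assert (Sne : exists x, SS x).
  { destruct (Fm_cover p U a U nat (fun n => Lt U (INR n)) (Fm_self p U a)) as [n Hn].
    - intros n x [Ux _]; auto.
    - intros x Ux. destruct (arch_nat x) as [n Hn]. exists n. split; auto.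
    - exists (INR n); auto. }
  assert (Sneg : forall x, x <= 0 -> ~ SS x).
  { intros x Hx HS. apply (Fm_empty p U a _ HS). intros y [Uy Hy]. pose proof (Hpos y Uy); lra. }
  set (T := fun x => 0 <= x /\ ~ SS x).
  destruct Sne as [x0 Hx0].
  assert (Tb : bound T).
  { exists x0. intros t [Ht HnS]. apply Rnot_lt_le; intro Hlt. apply HnS. apply (Smono x0); auto; lra. }
  assert (Tne : exists x, T x) by (exists 0; split; [lra| apply Sneg; lra]).
  destruct (completeness T Tb Tne) as [l [Hub Hlub]].
  assert (Hl0 : 0 <= l) by (apply Hub; split; [lra|apply Sneg; lra]).
  assert (P1 : forall e, 0 < e -> SS (l + e)).
  { intros e He. apply NNPP; intro HnS. assert (l + e <= l) by (apply Hub; split; [lra|auto]). lra. }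
  assert (P2 : forall x, x < l -> ~ SS x).
  { intros x Hx HS. assert (l <= x); [|lra]. apply Hlub. intros t [Ht HnS].
    apply Rnot_lt_le; intro Hlt. apply HnS. apply (Smono x); auto; lra. }
  assert (PB : forall e, 0 < e -> Fm p U a (Ball U l e)).
  { intros e He.
    destruct (Fm_cover p U a (Lt U (l + e)) bool
      (fun b => if b then Lt U (l - e/2) else Ball U l e) (P1 e He)) as [[|] Hb].
    - intros [|] x; simpl; intros [Ux Hx]; split; auto; [lra| split_Rabs; lra].
    - intros x [Ux Hx]. destruct (Rlt_dec x (l - e/2)).
      + exists true. split; auto.
      + exists false. split; auto. split_Rabs; lra.
    - exfalso. apply (P2 (l - e/2)); [lra| exact Hb].
    - exact Hb. }
  exists l. split; auto.
  apply NNPP; intro HnU.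
  set (Q := fun (nb : nat * bool) y =>
    Rabs (y - l) < 1 /\ (if snd nb then y < l - / INR (S (fst nb)) else l + / INR (S (fst nb)) < y)).
  assert (HQ : forall nb, Ropen (Q nb)).
  { intros [n [|]]; apply Ropen_and; try apply Ropen_ball; [apply Ropen_lt|apply Ropen_gt]. }
  destruct (Fm_cover p U a (Ball U l 1) (nat * bool) (fun nb => opand U (Q nb) (HQ nb)) (PB 1 ltac:(lra)))
    as [[n b] Hnb].
  - intros nb x [Ux [Hx _]]. split; auto.
  - intros x [Ux Hx].
    assert (Hne : x <> l) by (intro; subst; auto).
    assert (Hd : 0 < Rabs (x - l)) by (apply Rabs_pos_lt; lra).
    destruct (archimed_cor1 (Rabs (x - l)) Hd) as [N [HN HN0]].
    destruct N as [|n]; [lia|].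
    destruct (Rlt_dec x l).
    + exists (n, true). split; auto. split; auto. unfold Q, fst, snd. split_Rabs; lra.
    + exists (n, false). split; auto. split; auto. unfold Q, fst, snd. split_Rabs; lra.
  - assert (Hdp : 0 < / INR (S n)) by (apply Rinv_0_lt_compat, lt_0_INR; lia).
    destruct b.
    + apply (P2 (l - / INR (S n))); [lra|].
      apply (Fm_mono p U a (opand U (Q (n, true)) (HQ (n, true))) (Lt U (l - / INR (S n)))); [| intros x [Ux _]; exact Ux | exact Hnb].
      intros x [Ux [_ Hx]]. split; auto.
    + apply (Fm_empty p U a _ (Fm_inter p U a _ _ Hnb (P1 (/ INR (S n)) Hdp))).
      intros x [[Ux [_ H1]] [_ H2]]. cbn [snd fst] in H1. lra.
Qed.

Lemma lamP_uniq (p : point) (U : Open) (a : pt p U) l1 l2 : lamP p U a l1 -> lamP p U a l2 -> l1 = l2.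
Proof.
  intros [_ H1] [_ H2]. apply NNPP; intro Hne.
  assert (He : 0 < Rabs (l1 - l2) / 2) by (assert (0 < Rabs (l1 - l2)) by (apply Rabs_pos_lt; lra); lra).
  apply (Fm_empty p U a _ (Fm_inter p U a _ _ (H1 _ He) (H2 _ He))).
  intros x [[_ Hx1] [_ Hx2]]. revert Hx1 Hx2. split_Rabs; lra.
Qed.

Definition lam (p : point) (U : Open) (a : pt p U) : R :=
  proj1_sig (constructive_indefinite_description _ (lam_ex p U a)).

Lemma lam_spec (p : point) (U : Open) (a : pt p U) : lamP p U a (lam p U a).
Proof. unfold lam. destruct (constructive_indefinite_description _ _); auto. Qed.

Lemma lam_scale (p : point) (V U : Open) n (h : hom V U n) (a : pt p V) :
  lam p U (pmap p V U n h a) = INR n * lam p V a.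
Proof.
  apply (lamP_uniq p U (pmap p V U n h a)); [apply lam_spec|].
  destruct (lam_spec p V a) as [HV HF]. set (l := lam p V a) in *.
  pose proof h as [Hn HVU].
  assert (Hnp : 0 < INR n) by (apply lt_0_INR; lia).
  split; [apply HVU; auto|].
  intros e He. destruct (HF (e / INR n) ltac:(apply Rdiv_lt_0_compat; auto)) as [a' [h' E]].
  assert (g : hom (Ball V l (e / INR n)) (Ball U (INR n * l) e) n).
  { split; auto. intros x [Vx Hx]. split; [apply HVU; auto|].
    rewrite <- Rmult_minus_distr_l, Rabs_mult, Rabs_right by lra.
    apply Rmult_lt_compat_l with (r := INR n) in Hx; auto.
    replace (INR n * (e / INR n)) with e in Hx by (field; lra). auto. }
  exists (pmap p _ _ n g a'). exists (hom_incl _ _ (fun x (Hx : Ball U (INR n * l) e x) => proj1 Hx)).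
  assert (h3 : hom (Ball V l (e / INR n)) U n).
  { split; auto. intros x [Vx _]. apply HVU; auto. }
  rewrite (pmap_comp' p _ _ _ _ _ n _ _ h3) by lia. rewrite <- E.
  rewrite (pmap_comp' p _ _ _ _ _ n _ _ h3) by lia. reflexivity.
Qed.

Lemma rho_restr (p : point) (r : stalk_hom p) (W U : Open) (h : hom W U 1) (a' : pt p W) g :
  O_sec U g -> rho p r W g a' = rho p r U g (pmap p W U 1 h a').
Proof.
  intros Hg. rewrite <- (rho_res p r W U 1 h g a' Hg). f_equal.
  apply functional_extensionality; intro x. simpl. rewrite Rmult_1_l. auto.
Qed.

Lemma rho_const (p : point) (r : stalk_hom p) (U : Open) a c :
  rho p r U (fun _ => Some c) a = Some c.
Proof.
  assert (H0 : O_sec U (fun _ => Some 0)).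
  { apply (O_sec_ext U (aff 0 (Some 0))); [|apply O_sec_aff].
    intros x _. unfold aff; simpl. f_equal; ring. }
  pose proof (rho_lin p r (Some c) U (fun _ => Some 0) a H0) as H.
  rewrite (rho_one p r U a) in H. simpl in H. rewrite Rplus_0_r in H. exact H.
Qed.

Lemma R_lb (p : point) (r : stalk_hom p) (U : Open) (a : pt p U) k c e : 0 < e ->
  exists w, rho p r U (aff k (Some c)) a = Some w /\ c + IZR k * lam p U a - e <= w.
Proof.
  intros He. set (l := lam p U a). destruct (lam_spec p U a) as [Ul HF]. fold l in Ul, HF.
  set (d := e / (Rabs (IZR k) + 1)).
  assert (Hk0 : 0 <= Rabs (IZR k)) by apply Rabs_pos.
  assert (Hd : 0 < d) by (unfold d; apply Rdiv_lt_0_compat; lra).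
  destruct (HF d Hd) as [a' [h E]].
  set (W := Ball U l d) in *.
  rewrite <- E, <- (rho_restr p r W U h a') by apply O_sec_aff.
  set (v := c + IZR k * l).
  assert (Heq : forall x, W x -> aff k (Some c) x = mx (aff k (Some c) x) ((fun _ => Some (v - e)) x)).
  { intros x [Wx Hx]. unfold aff; simpl. f_equal. symmetry. apply Rmax_left.
    assert (Rabs (IZR k * x - IZR k * l) < e).
    { rewrite <- Rmult_minus_distr_l, Rabs_mult.
      apply Rle_lt_trans with (Rabs (IZR k) * d).
      - apply Rmult_le_compat_l; auto. lra.
      - unfold d. apply Rmult_lt_reg_r with (Rabs (IZR k) + 1); [lra|].
        field_simplify; lra. }
    unfold v. split_Rabs; lra. }
  assert (HW1 : O_sec W (aff k (Some c))) by apply O_sec_aff.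
  assert (HW2 : O_sec W (fun _ => Some (v - e))).
  { apply (O_sec_ext W (aff 0 (Some (v - e)))); [|apply O_sec_aff].
    intros x _. unfold aff; simpl. f_equal; ring. }
  pose proof (rho_ext p r W _ _ a' HW1 (O_sec_ext W _ _ Heq HW1) Heq) as H1.
  pose proof (rho_max p r W _ _ a' HW1 HW2) as H2. cbv beta in H1, H2.
  rewrite H2, (rho_const p r W a' (v - e)) in H1.
  destruct (rho p r W (aff k (Some c)) a') as [w|] eqn:Ew.
  - exists w. split; auto. simpl in H1. injection H1 as H1. rewrite H1. apply Rmax_r.
  - simpl in H1. discriminate.
Qed.

Lemma R_aff (p : point) (r : stalk_hom p) (U : Open) (a : pt p U) k b :
  rho p r U (aff k b) a = aff k b (lam p U a).
Proof.
  destruct b as [c|].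
  2:{ unfold aff; simpl. apply rho_zero. }
  set (l := lam p U a). set (v := c + IZR k * l).
  destruct (R_lb p r U a k c 1 ltac:(lra)) as [w [Ew _]].
  destruct (R_lb p r U a (- k) (2 * v - c) 1 ltac:(lra)) as [w' [Ew' _]].
  assert (Lw : forall e, 0 < e -> v - e <= w).
  { intros e He. destruct (R_lb p r U a k c e He) as [w2 [E2 H2]]. rewrite Ew in E2.
    injection E2 as ->. fold l in H2. unfold v. lra. }
  assert (Lw' : forall e, 0 < e -> v - e <= w').
  { intros e He. destruct (R_lb p r U a (- k) (2 * v - c) e He) as [w2 [E2 H2]]. rewrite Ew' in E2.
    injection E2 as ->. fold l in H2. rewrite opp_IZR in H2. unfold v in *. lra. }
  assert (Hs : pl (Some w) (Some w') = Some (2 * v)).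
  { rewrite <- Ew, <- Ew', <- (rho_plus p r U _ _ a (O_sec_aff U _ _) (O_sec_aff U _ _)).
    rewrite <- (rho_const p r U a (2 * v)). f_equal. apply functional_extensionality; intro x.
    unfold aff; simpl. rewrite opp_IZR. f_equal. ring. }
  simpl in Hs. injection Hs as Hs.
  assert (v <= w) by (apply Rnot_lt_le; intro; specialize (Lw ((v - w)/2) ltac:(lra)); lra).
  assert (v <= w') by (apply Rnot_lt_le; intro; specialize (Lw' ((v - w')/2) ltac:(lra)); lra).
  rewrite Ew. unfold aff; simpl. f_equal. fold l. fold v. lra.
Qed.

Lemma rho_eval (p : point) (r : stalk_hom p) (U : Open) f a :
  O_sec U f -> rho p r U f a = f (lam p U a).
Proof.
  intros Hf. destruct (lam_spec p U a) as [Ul HF].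
  destruct (geom U f (lam p U a) Hf Ul) as [d [k1 [b1 [k2 [b2 [Hd Hy]]]]]].
  destruct (HF d Hd) as [a' [h E]].
  set (W := Ball U (lam p U a) d) in *.
  assert (HfW : O_sec W f) by (apply (O_sec_restrict W U); auto; intros x [Ux _]; auto).
  assert (Heq : forall x, W x -> f x = mx (aff k1 b1 x) (aff k2 b2 x)) by (intros x [Ux Hx]; auto).
  rewrite <- E, <- (rho_restr p r W U h a' f Hf).
  rewrite (rho_ext p r W _ _ a' HfW (O_sec_ext W _ _ Heq HfW) Heq).
  rewrite (rho_max p r W _ _ a' (O_sec_aff W _ _) (O_sec_aff W _ _)).
  rewrite !(rho_restr p r W U h a') by apply O_sec_aff. rewrite E, !R_aff.
  symmetry. apply Hy; auto. rewrite Rminus_diag, Rabs_R0. auto.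
Qed.

Definition rho_can (p : point) : stalk_hom p.
Proof.
  refine (Build_stalk_hom p (fun U f a => f (lam p U a)) _ _ _ _ _ _ _).
  - intros U f g a _ _ E. apply E. apply (proj1 (lam_spec p U a)).
  - intros V U n h f a _. rewrite lam_scale. reflexivity.
  - reflexivity.
  - reflexivity.
  - reflexivity.
  - reflexivity.
  - reflexivity.
Defined.

Lemma lam_iso (p q : point) (al : forall U, pt p U -> pt q U)
  (Hal : forall V U n (h : hom V U n) a, al U (pmap p V U n h a) = pmap q V U n h (al V a))
  (U : Open) (a : pt p U) : lam q U (al U a) = lam p U a.
Proof.
  apply (lamP_uniq q U (al U a)); [apply lam_spec|].
  destruct (lam_spec p U a) as [Ul HF]. split; auto.
  intros e He. destruct (HF e He) as [a' [h E]]. exists (al _ a'), h.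
  rewrite <- Hal, E. auto.
Qed.

Theorem theorem4p3 :
  (* surjective *)
  (forall p : point, exists (q : point) (s : stalk_hom q), pt_iso q p) /\
  (* injective *)
  (forall (p : point) (r : stalk_hom p) (q : point) (s : stalk_hom q),
      pt_iso p q -> site_pt_iso p r q s).
Proof.
  split.
  - intros p. exists p, (rho_can p). exists (fun U a => a), (fun U a => a).
    split; [auto|split; auto].
  - intros p r q s [al [be [H1 [H2 H3]]]]. exists al, be.
    split; [auto|split; [auto|split; [auto|]]].
    intros U f a Hf. rewrite (rho_eval q s U f _ Hf), (rho_eval p r U f a Hf).
    rewrite (lam_iso p q al H3). auto.
Qed.
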